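(* Let $S=\{18,26,30,59,68,70,87,90,91,93,96,99,100\}$. For every $n$ with $1\le n\le 100$ and $n\notin S$, the center $X_n$ lies inside angle $A$ in every isosceles triangle $ABC$ with $b=c>a$. For each $n\in S$, it is not the case that $X_n$ lies inside angle $A$ in every such triangle.
   Context: $X_n$ denotes the $n$-th triangle center listed in Kimberling's Encyclopedia of Triangle Centers (ETC), given by barycentric coordinates in terms of $a=BC$, $b=CA$, $c=AB$. A point is inside angle $A$ if it lies in the open convex region bounded by the rays $AB$ and $AC$; for a point with barycentric coordinates $(u:v:w)$ this holds iff $v(u+v+w)>0$ and $w(u+v+w)>0$. *)

(* Defs.v *)
From Stdlib Require Import Reals List.
Open Scope R_scope.

(** Kimberling's ETC centers X(1)..X(100).

  A triangle center X(n) is given by a barycentric center function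
  f_n(a,b,c) = N_n(a,b,c) / D_n(a,b,c) (in terms of the side lengths and of
  the angles A, B, C), and X(n) = f_n(a,b,c) : f_n(b,c,a) : f_n(c,a,b).
  [etc n a b c A B C] is the pair (N_n, D_n) of the first barycentric
  coordinate.  Where ETC lists *trilinears* x(a,b,c), the barycentric
  function is a * x(a,b,c) (written as [a * ...] below).
  To handle the (projectively meaningful) case where a denominator vanishes
  (e.g. X(100) = a/(b-c) : ... when b = c), the barycentric triple is taken
  with denominators cleared:  (N1 D2 D3 : D1 N2 D3 : D1 D2 N3). *)

Definition angle (a b c : R) : R := acos ((b ^ 2 + c ^ 2 - a ^ 2) / (2 * b * c)).

Definition etc (n : nat) (a b c A B C : R) : R * R :=
  match n with
  | 1%nat => (a * 1, 1)
  | 2%nat => (1, 1)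
  | 3%nat => (a * cos A, 1)
  | 4%nat => (a * 1, cos A)
  | 5%nat => (a * cos (B - C), 1)
  | 6%nat => (a * a, 1)
  | 7%nat => (1, b + c - a)
  | 8%nat => (b + c - a, 1)
  | 9%nat => (a * (b + c - a), 1)
  | 10%nat => (a * (b * c * (b + c)), 1)
  | 11%nat => (a * (1 - cos (B - C)), 1)
  | 12%nat => (a * (1 + cos (B - C)), 1)
  | 13%nat => (a * 1, sin (A + PI / 3))
  | 14%nat => (a * 1, sin (A - PI / 3))
  | 15%nat => (a * sin (A + PI / 3), 1)
  | 16%nat => (a * sin (A - PI / 3), 1)
  | 17%nat => (a * 1, sin (A + PI / 6))
  | 18%nat => (a * 1, sin (A - PI / 6))
  | 19%nat => (a * sin A, cos A)
  | 20%nat => (a * (cos A - cos B * cos C), 1)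
  | 21%nat => (a * 1, cos B + cos C)
  | 22%nat => (a * (a * (b ^ 4 + c ^ 4 - a ^ 4)), 1)
  | 23%nat => (a * (a * (b ^ 4 + c ^ 4 - a ^ 4 - b ^ 2 * c ^ 2)), 1)
  | 24%nat => (a * cos (2 * A), cos A)
  | 25%nat => (a * (sin A * sin A), cos A)
  | 26%nat => (a * (a * (b ^ 2 * cos (2 * B) + c ^ 2 * cos (2 * C)
                         - a ^ 2 * cos (2 * A))), 1)
  | 27%nat => (a * 1, cos A * (b + c))
  | 28%nat => (a * sin A, cos A * (b + c))
  | 29%nat => (a * 1, cos A * (cos B + cos C))
  | 30%nat => (a * (cos A - 2 * cos B * cos C), 1)
  | 31%nat => (a * a ^ 2, 1)
  | 32%nat => (a * a ^ 3, 1)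
  | 33%nat => (a * (cos A + 1), cos A)
  | 34%nat => (a * (cos A - 1), cos A)
  | 35%nat => (a * (1 + 2 * cos A), 1)
  | 36%nat => (a * (1 - 2 * cos A), 1)
  | 37%nat => (a * (b + c), 1)
  | 38%nat => (a * (b ^ 2 + c ^ 2), 1)
  | 39%nat => (a * (a * (b ^ 2 + c ^ 2)), 1)
  | 40%nat => (a * (cos B + cos C - cos A - 1), 1)
  | 41%nat => (a * (a ^ 2 * (b + c - a)), 1)
  | 42%nat => (a * (a * (b + c)), 1)
  | 43%nat => (a * (a * b + a * c - b * c), 1)
  | 44%nat => (a * (b + c - 2 * a), 1)
  | 45%nat => (a * (2 * b + 2 * c - a), 1)
  | 46%nat => (a * (cos B + cos C - cos A), 1)
  | 47%nat => (a * cos (2 * A), 1)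
  | 48%nat => (a * sin (2 * A), 1)
  | 49%nat => (a * cos (3 * A), 1)
  | 50%nat => (a * sin (3 * A), 1)
  | 51%nat => (a * (a ^ 2 * cos (B - C)), 1)
  | 52%nat => (a * (cos (2 * A) * cos (B - C)), 1)
  | 53%nat => (a * (sin A * cos (B - C)), cos A)
  | 54%nat => (a * 1, cos (B - C))
  | 55%nat => (a * (a * (b + c - a)), 1)
  | 56%nat => (a * a, b + c - a)
  | 57%nat => (a * 1, b + c - a)
  | 58%nat => (a * a, b + c)
  | 59%nat => (a * 1, 1 - cos (B - C))
  | 60%nat => (a * 1, 1 + cos (B - C))
  | 61%nat => (a * cos (A - PI / 3), 1)
  | 62%nat => (a * cos (A + PI / 3), 1)
  | 63%nat => (a * cos A, sin A)
  | 64%nat => (a * 1, cos A - cos B * cos C)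
  | 65%nat => (a * (cos B + cos C), 1)
  | 66%nat => (a * 1, a * (b ^ 4 + c ^ 4 - a ^ 4))
  | 67%nat => (a * 1, a * (b ^ 4 + c ^ 4 - a ^ 4 - b ^ 2 * c ^ 2))
  | 68%nat => (a * cos A, cos (2 * A))
  | 69%nat => (b ^ 2 + c ^ 2 - a ^ 2, 1)
  | 70%nat => (a * 1, a * (b ^ 2 * cos (2 * B) + c ^ 2 * cos (2 * C)
                            - a ^ 2 * cos (2 * A)))
  | 71%nat => (a * ((b + c) * cos A), 1)
  | 72%nat => (a * ((b + c) * cos A), sin A)
  | 73%nat => (a * ((b + c) * cos A), b + c - a)
  | 74%nat => (a * 1, cos A - 2 * cos B * cos C)
  | 75%nat => (a * 1, a ^ 2)
  | 76%nat => (a * 1, a ^ 3)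
  | 77%nat => (a * cos A, cos A + 1)
  | 78%nat => (a * cos A, cos A - 1)
  | 79%nat => (a * 1, 1 + 2 * cos A)
  | 80%nat => (a * 1, 1 - 2 * cos A)
  | 81%nat => (a * 1, b + c)
  | 82%nat => (a * 1, b ^ 2 + c ^ 2)
  | 83%nat => (a * 1, a * (b ^ 2 + c ^ 2))
  | 84%nat => (a * 1, cos B + cos C - cos A - 1)
  | 85%nat => (1, a * (b + c - a))
  | 86%nat => (1, b + c)
  | 87%nat => (a * 1, a * b + a * c - b * c)
  | 88%nat => (a * 1, b + c - 2 * a)
  | 89%nat => (a * 1, 2 * b + 2 * c - a)
  | 90%nat => (a * 1, cos B + cos C - cos A)
  | 91%nat => (a * 1, cos (2 * A))
  | 92%nat => (a * 1, sin (2 * A))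
  | 93%nat => (a * 1, cos (3 * A))
  | 94%nat => (a * 1, sin (3 * A))
  | 95%nat => (1, a ^ 2 * (b ^ 2 + c ^ 2) - (b ^ 2 - c ^ 2) ^ 2)
  | 96%nat => (a * 1, cos (2 * A) * cos (B - C))
  | 97%nat => (a * cos A, sin A * cos (B - C))
  | 98%nat => (a * (b * c), b ^ 4 + c ^ 4 - a ^ 2 * b ^ 2 - a ^ 2 * c ^ 2)
  | 99%nat => (a * (b * c), b ^ 2 - c ^ 2)
  | 100%nat => (a * 1, b - c)
  | _ => (0, 1)
  end.

Definition etc_fun (n : nat) (a b c : R) : R * R :=
  etc n a b c (angle a b c) (angle b c a) (angle c a b).

Definition X (n : nat) (a b c : R) : R * R * R :=
  let (N1, D1) := etc_fun n a b c in
  let (N2, D2) := etc_fun n b c a in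
  let (N3, D3) := etc_fun n c a b in
  (N1 * D2 * D3, D1 * N2 * D3, D1 * D2 * N3).

Definition inside_angle_A (p : R * R * R) : Prop :=
  let '(u, v, w) := p in
  v * (u + v + w) > 0 /\ w * (u + v + w) > 0.

Definition S_exc : list nat :=
  (18 :: 26 :: 30 :: 59 :: 68 :: 70 :: 87 :: 90 :: 91 :: 93 :: 96 :: 99 :: 100 :: nil)%nat.

(** X(n) lies inside angle A in every isosceles triangle with b = c > a
    (a > 0 makes the side lengths a, b, b a nondegenerate triangle). *)
Definition inside_all_isosceles (n : nat) : Prop :=
  forall a b : R, 0 < a -> a < b -> inside_angle_A (X n a b b).

(* Main.v *)
Require Import Defs.
From Stdlib Require Import Reals List Arith Lra Psatz Nsatz.
Open Scope R_scope.


From Stdlib Require Import Reals Lra Psatz.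
Open Scope R_scope.
Lemma sqd X Y : 0 <= X -> 0 <= Y -> Y*Y < X*X -> 0 < X - Y.
Proof. intros. nra. Qed.
Lemma L1 (t s r3 : R) (Ht0 : 0 < t) (Ht1 : t < 1/2) (Hs : 0 < s) (Hss : s * s = 1 - t*t) (Hr : 0 < r3) (Hrr : r3 * r3 = 3) : 0 < s - t*r3.
Proof. assert (Htt : 0 < 1 - t*t) by nra. assert (Htr : 0 < t * r3) by nra. assert (Hsr : 0 < s * r3) by nra. apply sqd; [nra|nra|]. solve [ nra | replace (t*r3*(t*r3)) with (t*t*(r3*r3)) by ring ; rewrite Hrr, Hss ; nra ]. Qed.
Lemma L2 (t s r3 : R) (Ht0 : 0 < t) (Ht1 : t < 1/2) (Hs : 0 < s) (Hss : s * s = 1 - t*t) (Hr : 0 < r3) (Hrr : r3 * r3 = 3) : 0 < (1-2*t*t)*r3 - 2*t*s.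
Proof. assert (Htt : 0 < 1 - t*t) by nra. assert (Htr : 0 < t * r3) by nra. assert (Hsr : 0 < s * r3) by nra. apply sqd; [nra|nra|]. solve [ nra | replace (2*t*s*(2*t*s)) with (4*(t*t)*(s*s)) by ring ; replace ((1-2*t*t)*r3*((1-2*t*t)*r3)) with ((1-2*t*t)*(1-2*t*t)*(r3*r3)) by ring ; rewrite Hrr, Hss ; assert (0 < t*t < 1/4) by nra ; nra ]. Qed.
Lemma L3 (t s r3 : R) (Ht0 : 0 < t) (Ht1 : t < 1/2) (Hs : 0 < s) (Hss : s * s = 1 - t*t) (Hr : 0 < r3) (Hrr : r3 * r3 = 3) : 0 < (1-t*t)*r3 - 3*t*s.
Proof. assert (Htt : 0 < 1 - t*t) by nra. assert (Htr : 0 < t * r3) by nra. assert (Hsr : 0 < s * r3) by nra. apply sqd; [nra|nra|]. solve [ nra | replace (3*t*s*(3*t*s)) with (9*(t*t)*(s*s)) by ring ; replace ((1-t*t)*r3*((1-t*t)*r3)) with ((1-t*t)*(1-t*t)*(r3*r3)) by ring ; rewrite Hrr, Hss ; assert (0 < t*t < 1/4) by nra ; nra ]. Qed.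
Lemma L4 (t s r3 : R) (Ht0 : 0 < t) (Ht1 : t < 1/2) (Hs : 0 < s) (Hss : s * s = 1 - t*t) (Hr : 0 < r3) (Hrr : r3 * r3 = 3) : 0 < s*(1+2*t*t) - 2*t*r3*(1-t*t).
Proof. assert (Htt : 0 < 1 - t*t) by nra. assert (Htr : 0 < t * r3) by nra. assert (Hsr : 0 < s * r3) by nra. apply sqd; [nra|nra|]. solve [ nra | replace (2*t*r3*(1-t*t)*(2*t*r3*(1-t*t))) with (4*(t*t)*(r3*r3)*((1-t*t)*(1-t*t))) by ring ; replace (s*(1+2*t*t)*(s*(1+2*t*t))) with ((s*s)*(1+2*t*t)*(1+2*t*t)) by ring ; rewrite Hrr, Hss ; assert (0 < t*t < 1/4) by nra ; assert (0 < (1-4*(t*t))*(1-4*(t*t))) by nra ; nra ]. Qed.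
Lemma L5 (t s r3 : R) (Ht0 : 0 < t) (Ht1 : t < 1/2) (Hs : 0 < s) (Hss : s * s = 1 - t*t) (Hr : 0 < r3) (Hrr : r3 * r3 = 3) : 0 < s*r3 - t.
Proof. assert (Htt : 0 < 1 - t*t) by nra. assert (Htr : 0 < t * r3) by nra. assert (Hsr : 0 < s * r3) by nra. apply sqd; [nra|nra|]. solve [ nra | replace (s*r3*(s*r3)) with ((s*s)*(r3*r3)) by ring ; rewrite Hrr, Hss ; nra ]. Qed.
Lemma L6 (t s r3 : R) (Ht0 : 0 < t) (Ht1 : t < 1/2) (Hs : 0 < s) (Hss : s * s = 1 - t*t) (Hr : 0 < r3) (Hrr : r3 * r3 = 3) : 0 < s*r3*(1+2*t*t) - 2*t*(1-t*t).
Proof. assert (Htt : 0 < 1 - t*t) by nra. assert (Htr : 0 < t * r3) by nra. assert (Hsr : 0 < s * r3) by nra. apply sqd; [nra|nra|]. solve [ nra | replace (s*r3*(1+2*t*t)*(s*r3*(1+2*t*t))) with ((s*s)*(r3*r3)*((1+2*t*t)*(1+2*t*t))) by ring ; rewrite Hrr, Hss ; assert (0 < t*t < 1/4) by nra ; nra ]. Qed.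


Lemma cos2x x : cos (2 * x) = 2 * (cos x * cos x) - 1.
Proof. rewrite cos_2a. pose proof (sin2_cos2 x). unfold Rsqr in H. lra. Qed.
Lemma sin2x x : sin (2 * x) = 2 * sin x * cos x.
Proof. apply sin_2a. Qed.
Lemma cos3x x : cos (3 * x) = 4 * (cos x * cos x * cos x) - 3 * cos x.
Proof. replace (3*x) with (2*x + x) by ring. rewrite cos_plus, cos_2a, sin_2a.
  pose proof (sin2_cos2 x). unfold Rsqr in H. apply Rminus_diag_uniq.
  match goal with |- ?l - ?r = 0 => replace (l - r) with (-3*cos x*(sin x*sin x + cos x*cos x - 1)) by ring end.
  rewrite H. ring. Qed.
Lemma sin3x x : sin (3 * x) = 3 * sin x - 4 * (sin x * sin x * sin x).
Proof. replace (3*x) with (2*x + x) by ring. rewrite sin_plus, cos_2a, sin_2a.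
  pose proof (sin2_cos2 x). unfold Rsqr in H. apply Rminus_diag_uniq.
  match goal with |- ?l - ?r = 0 => replace (l - r) with (3*sin x*(sin x*sin x + cos x*cos x - 1)) by ring end.
  rewrite H. ring. Qed.

Lemma angle1 b t : 0 < b -> angle (2*b*t) b b = acos (1 - 2*(t*t)).
Proof. intros Hb. unfold angle. f_equal. field. lra. Qed.
Lemma angle2 b t : 0 < b -> 0 < t -> angle b b (2*b*t) = acos t.
Proof. intros Hb Ht. unfold angle. f_equal. field. lra. Qed.
Lemma angle3 b t : 0 < b -> 0 < t -> angle b (2*b*t) b = acos t.
Proof. intros Hb Ht. unfold angle. f_equal. field. lra. Qed.

Lemma inside_sym N1 D1 N2 D2 N3 D3 :
  N3 = N2 -> D3 = D2 -> D2 <> 0 -> D1 * N2 * (N1 * D2 + 2 * D1 * N2) > 0 ->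
  inside_angle_A (N1 * D2 * D3, D1 * N2 * D3, D1 * D2 * N3).
Proof.
  intros -> -> HD H. unfold inside_angle_A.
  assert (HD2 : D2 * D2 > 0) by (destruct (Rlt_or_le 0 D2); nra).
  replace (D1 * N2 * D2 * (N1 * D2 * D2 + D1 * N2 * D2 + D1 * D2 * N2))
    with ((D2 * D2) * (D1 * N2 * (N1 * D2 + 2 * D1 * N2))) by ring.
  split; nra.
Qed.

Definition s_ (t : R) := sqrt (1 - t*t).
Lemma s_pos t (Ht0 : 0 < t) (Ht1 : t < 1/2) : 0 < s_ t.
Proof. unfold s_. apply sqrt_lt_R0. nra. Qed.
Lemma s_sq t (Ht0 : 0 < t) (Ht1 : t < 1/2) : s_ t * s_ t = 1 - t*t.
Proof. unfold s_. apply sqrt_sqrt. nra. Qed.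
Lemma cosp t (Ht0 : 0 < t) (Ht1 : t < 1/2) : cos (acos (1 - 2*(t*t))) = 1 - 2*(t*t).
Proof. apply cos_acos. nra. Qed.
Lemma sinp t (Ht0 : 0 < t) (Ht1 : t < 1/2) : sin (acos (1 - 2*(t*t))) = 2 * t * s_ t.
Proof. rewrite sin_acos by nra.
  replace (1 - (1 - 2 * (t * t))²) with ((2*t)*(2*t)*(1-t*t)) by (unfold Rsqr; ring).
  rewrite sqrt_mult_alt by nra. rewrite sqrt_square by lra. reflexivity. Qed.
Lemma cosq t (Ht0 : 0 < t) (Ht1 : t < 1/2) : cos (acos t) = t.
Proof. apply cos_acos. lra. Qed.
Lemma sinq t (Ht0 : 0 < t) (Ht1 : t < 1/2) : sin (acos t) = s_ t.
Proof. rewrite sin_acos by lra. unfold s_, Rsqr. reflexivity. Qed.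
Lemma cosqp t (Ht0 : 0 < t) (Ht1 : t < 1/2) : cos (acos t - acos (1 - 2*(t*t))) = t * (3 - 4*(t*t)).
Proof. rewrite cos_minus, (cosp t Ht0 Ht1), (cosq t Ht0 Ht1), (sinp t Ht0 Ht1), (sinq t Ht0 Ht1).
  pose proof (s_sq t Ht0 Ht1). nra. Qed.
Lemma cospq t (Ht0 : 0 < t) (Ht1 : t < 1/2) : cos (acos (1 - 2*(t*t)) - acos t) = t * (3 - 4*(t*t)).
Proof. rewrite cos_minus, (cosp t Ht0 Ht1), (cosq t Ht0 Ht1), (sinp t Ht0 Ht1), (sinq t Ht0 Ht1).
  pose proof (s_sq t Ht0 Ht1). nra. Qed.

Ltac prep n :=
  intros b t Hb Ht0 Ht1;
  cbv beta iota zeta delta [X etc_fun etc];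
  rewrite ?(angle1 b t Hb), ?(angle2 b t Hb Ht0), ?(angle3 b t Hb Ht0);
  rewrite ?Rminus_diag, ?cos_0, ?(cosqp t Ht0 Ht1), ?(cospq t Ht0 Ht1);
  rewrite ?cos2x, ?sin2x, ?cos3x, ?sin3x, ?cos_plus, ?sin_plus, ?cos_minus, ?sin_minus,
     ?cos_PI3, ?sin_PI3, ?cos_PI6, ?sin_PI6;
  rewrite ?(cosp t Ht0 Ht1), ?(sinp t Ht0 Ht1), ?(cosq t Ht0 Ht1), ?(sinq t Ht0 Ht1);
  pose proof (s_pos t Ht0 Ht1); pose proof (s_sq t Ht0 Ht1);
  set (s := s_ t) in *;
  pose proof (Rlt_sqrt3_0); pose proof (sqrt_sqrt 3 ltac:(lra));
  set (r3 := sqrt 3) in *.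

Definition good n := forall b t, 0 < b -> 0 < t -> t < 1/2 -> inside_angle_A (X n (2*b*t) b b).

Lemma prod_ppp x y z : x > 0 -> y > 0 -> z > 0 -> x * y * z > 0.
Proof. intros; apply Rmult_gt_0_compat; [apply Rmult_gt_0_compat|]; assumption. Qed.
Lemma prod_pnn x y z : x > 0 -> y < 0 -> z < 0 -> x * y * z > 0.
Proof. intros. replace (x*y*z) with (x*((-y)*(-z))) by ring. apply Rmult_gt_0_compat; [|apply Rmult_gt_0_compat]; lra. Qed.
Lemma prod_npn x y z : x < 0 -> y > 0 -> z < 0 -> x * y * z > 0.
Proof. intros. replace (x*y*z) with (y*((-x)*(-z))) by ring. apply Rmult_gt_0_compat; [|apply Rmult_gt_0_compat]; lra. Qed.
Lemma prod_nnp x y z : x < 0 -> y < 0 -> z > 0 -> x * y * z > 0.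
Proof. intros. replace (x*y*z) with (z*((-x)*(-y))) by ring. apply Rmult_gt_0_compat; [|apply Rmult_gt_0_compat]; lra. Qed.

Ltac extra :=
  match goal with
  | Hs : 0 < ?s, Hss : ?s * ?s = 1 - ?t * ?t, H3 : 0 < ?r, Hr : ?r * ?r = 3 |- _ =>
    assert (2 * s > r) by nra;
    assert (0 < 1 - 2 * t) by lra; assert (0 < (1 - 2*t) * (1 - 2*t)) by nra
  end; cbn [pow] in *.

Ltac sgn := first [ nra | lra ].
Ltac neq0 := first [ apply Rgt_not_eq; sgn | apply Rlt_not_eq; sgn ].
Ltac finish :=
  apply inside_sym; [ring | ring | neq0 |
   first [ apply prod_ppp; sgn | apply prod_pnn; sgn | apply prod_npn; sgn | apply prod_nnp; sgn ] ].

Lemma mul_nn x y : x < 0 -> y < 0 -> 0 < x * y. Proof. intros; nra. Qed.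
Lemma mul_pn x y : 0 < x -> y < 0 -> x * y < 0. Proof. intros; nra. Qed.
Lemma mul_np x y : x < 0 -> 0 < y -> x * y < 0. Proof. intros; nra. Qed.
Lemma add_nn x y : x < 0 -> y < 0 -> x + y < 0. Proof. intros; lra. Qed.

Ltac pos0 := first [ lra | nra ].
Ltac pos d :=
  lazymatch d with
  | O => pos0
  | S ?d' =>
  lazymatch goal with
  | |- 0 < ?x * ?y => first [ apply Rmult_lt_0_compat; [pos d' | pos d'] | apply mul_nn; [neg d' | neg d'] | pos0 ]
  | |- 0 < ?x + ?y => first [ apply Rplus_lt_0_compat; [pos d' | pos d'] | pos0 ]
  | |- 0 < - ?x => apply Ropp_0_gt_lt_contravar; unfold Rgt; neg d'
  | |- _ => pos0
  end end
with neg d :=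
  lazymatch d with
  | O => pos0
  | S ?d' =>
  lazymatch goal with
  | |- ?x * ?y < 0 => first [ apply mul_pn; [pos d' | neg d'] | apply mul_np; [neg d' | pos d'] | pos0 ]
  | |- ?x + ?y < 0 => first [ apply add_nn; [neg d' | neg d'] | pos0 ]
  | |- - ?x < 0 => apply Ropp_lt_gt_0_contravar; unfold Rgt; pos d'
  | |- _ => pos0
  end end.

Ltac neq0' := first [ apply Rgt_not_eq; unfold Rgt; pos 6%nat | apply Rlt_not_eq; neg 6%nat ].
Ltac finish' :=
  apply inside_sym; [ring | ring | neq0' | unfold Rgt; pos 8%nat ].

Lemma main_ineq D1 N2 K d1 n2 k : D1 = d1 -> N2 = n2 -> K = k -> d1 * n2 * k > 0 -> D1 * N2 * K > 0.
Proof. intros -> -> ->; auto. Qed.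
Lemma neq_eq D d : D = d -> d <> 0 -> D <> 0.
Proof. intros ->; auto. Qed.
Ltac eqt := first [ring | field | nra | (repeat match goal with x := _ |- _ => clearbody x end); nsatz].
Ltac leaves :=
  match goal with
  | Ht0 : 0 < ?t, Ht1 : ?t < 1/2, Hs : 0 < ?s, Hss : ?s * ?s = 1 - ?t * ?t, H3 : 0 < ?r, Hr : ?r * ?r = 3 |- _ =>
    pose proof (L1 t s r Ht0 Ht1 Hs Hss H3 Hr); pose proof (L2 t s r Ht0 Ht1 Hs Hss H3 Hr);
    pose proof (L3 t s r Ht0 Ht1 Hs Hss H3 Hr); pose proof (L4 t s r Ht0 Ht1 Hs Hss H3 Hr);
    pose proof (L5 t s r Ht0 Ht1 Hs Hss H3 Hr); pose proof (L6 t s r Ht0 Ht1 Hs Hss H3 Hr)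
  end.
Lemma eq_cof s t r3 l r A B : s*s = 1-t*t -> r3*r3 = 3 -> l - r = A*(s*s-(1-t*t)) + B*(r3*r3-3) -> l = r.
Proof. intros H1 H2 H3. rewrite H1, H2 in H3. apply Rminus_diag_uniq. rewrite H3. ring. Qed.

Lemma not_inside N1 D1 N2 D2 N3 D3 :
  N3 = N2 -> D3 = D2 -> (D2 = 0 \/ D1 * N2 * (N1 * D2 + 2 * D1 * N2) <= 0) ->
  ~ inside_angle_A (N1 * D2 * D3, D1 * N2 * D3, D1 * D2 * N3).
Proof.
  intros -> -> HD. unfold inside_angle_A. intros [H _].
  replace (D1 * N2 * D2 * (N1 * D2 * D2 + D1 * N2 * D2 + D1 * D2 * N2))
    with ((D2 * D2) * (D1 * N2 * (N1 * D2 + 2 * D1 * N2))) in H by ring.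
  destruct HD as [HD|HD].
  - rewrite HD in H. lra.
  - assert (0 <= D2 * D2) by nra. nra.
Qed.
Lemma not_inside0 N1 D1 N2 D2 N3 D3 :
  D1 = 0 -> ~ inside_angle_A (N1 * D2 * D3, D1 * N2 * D3, D1 * D2 * N3).
Proof. intros ->. unfold inside_angle_A. intros [H _]. lra. Qed.
Definition bad n t0 := forall b t, 0 < b -> 0 < t -> t < 1/2 -> (b = 1 /\ t = t0) -> ~ inside_angle_A (X n (2*b*t) b b).

Lemma g1 : good 1.
Proof. prep 1. extra. finish'. Qed.

Lemma g2 : good 2.
Proof. prep 2. extra. finish'. Qed.

Lemma g3 : good 3.
Proof. prep 3. extra. finish'. Qed.

Lemma g4 : good 4.
Proof. prep 4. extra. finish'. Qed.

Lemma g5 : good 5.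
Proof. prep 5. extra. finish'. Qed.

Lemma g6 : good 6.
Proof. prep 6. extra. finish'. Qed.

Lemma g7 : good 7.
Proof. prep 7. extra. finish'. Qed.

Lemma g8 : good 8.
Proof. prep 8. extra. finish'. Qed.

Lemma g9 : good 9.
Proof. prep 9. extra. finish'. Qed.

Lemma g10 : good 10.
Proof. prep 10. extra. finish'. Qed.

Lemma g11 : good 11.
Proof. prep 11. extra. apply inside_sym; [ring|ring| |].
- apply (neq_eq _ (1 * ((1)))); [eqt | neq0'].
- apply (main_ineq _ _ _ (1 * ((1))) (b * ((1) - (3)*t + (4)*t*t*t)) (b * ((2) - (6)*t + (8)*t*t*t))); [eqt|eqt|eqt| unfold Rgt; pos 8%nat ].
Qed.

Lemma g12 : good 12.
Proof. prep 12. extra. finish'. Qed.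

Lemma g13 : good 13.
Proof. prep 13. extra. finish'. Qed.

Lemma g14 : good 14.
Proof. prep 14. extra. leaves. apply inside_sym; [ring|ring| |].
- apply (neq_eq _ ((1/2)*(s - t*r3))); [eqt | neq0'].
- apply (main_ineq _ _ _ (-((1/2)*((1-2*t*t)*r3 - 2*t*s))) b (b*(-((1-t*t)*r3 - 3*t*s)))); [eqt|eqt|eqt| unfold Rgt; pos 12%nat ].
Qed.

Lemma g15 : good 15.
Proof. prep 15. extra. finish'. Qed.

Lemma g16 : good 16.
Proof. prep 16. extra. leaves. apply inside_sym; [ring|ring| |].
- apply (neq_eq _ 1); [eqt | neq0'].
- apply (main_ineq _ _ _ 1 (b*((1/2)*(s - t*r3))) (b*(s*(1+2*t*t) - 2*t*r3*(1-t*t)))); [eqt|eqt|eqt| unfold Rgt; pos 12%nat ].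
Qed.

Lemma g17 : good 17.
Proof. prep 17. extra. finish'. Qed.

Lemma g19 : good 19.
Proof. prep 19. extra. finish'. Qed.

Lemma g20 : good 20.
Proof. prep 20. extra. apply inside_sym; [ring|ring| |].
- apply (neq_eq _ (1 * ((1)))); [eqt | neq0'].
- apply (main_ineq _ _ _ (1 * ((1))) (b * ((2)*t*t*t)) (b * ((2)*t - (2)*t*t*t))); [eqt|eqt|eqt| unfold Rgt; pos 8%nat ].
Qed.

Lemma g21 : good 21.
Proof. prep 21. extra. finish'. Qed.

Lemma g22 : good 22.
Proof. prep 22. extra. leaves. apply inside_sym; [ring|ring| |].
- apply (neq_eq _ 1); [eqt | neq0'].
- apply (main_ineq _ _ _ 1 (b*b*b*b*b*b*(16*t*t*t*t)) (b*b*b*b*b*b*(8*t*t*(1 + 4*t*t*(1 - 2*t*t))))); [eqt|eqt|eqt| unfold Rgt; pos 12%nat ].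
Qed.

Lemma g23 : good 23.
Proof. prep 23. extra. leaves. apply inside_sym; [ring|ring| |].
- apply (neq_eq _ 1); [eqt | neq0'].
- apply (main_ineq _ _ _ 1 (b*b*b*b*b*b*(-(4*t*t*((1-2*t)*(1+2*t))))) (b*b*b*b*b*b*(-(4*t*t*(((1-2*t)*(1+2*t))*((1-2*t)*(1+2*t))))))); [eqt|eqt|eqt| unfold Rgt; pos 12%nat ].
Qed.

Lemma g24 : good 24.
Proof. prep 24. extra. apply inside_sym; [ring|ring| |].
- apply (neq_eq _ (1 * (t))); [eqt | neq0'].
- apply (main_ineq _ _ _ (1 * ((1) - (2)*t*t)) (b * (- (1) + (2)*t*t)) (b * (- (2) + (10)*t*t - (24)*t*t*t*t + (16)*t*t*t*t*t*t))); [eqt|eqt|eqt| unfold Rgt; pos 8%nat ].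
Qed.

Lemma g25 : good 25.
Proof. prep 25. extra. finish'. Qed.

Lemma g27 : good 27.
Proof. prep 27. extra. finish'. Qed.

Lemma g28 : good 28.
Proof. prep 28. extra. finish'. Qed.

Lemma g29 : good 29.
Proof. prep 29. extra. finish'. Qed.

Lemma g31 : good 31.
Proof. prep 31. extra. finish'. Qed.

Lemma g32 : good 32.
Proof. prep 32. extra. finish'. Qed.

Lemma g33 : good 33.
Proof. prep 33. extra. finish'. Qed.

Lemma g34 : good 34.
Proof. prep 34. extra. finish'. Qed.

Lemma g35 : good 35.
Proof. prep 35. extra. finish'. Qed.

Lemma g36 : good 36.
Proof. prep 36. extra. apply inside_sym; [ring|ring| |].
- apply (neq_eq _ (1 * ((1)))); [eqt | neq0'].
- apply (main_ineq _ _ _ (1 * ((1))) (b * ((1) - (2)*t)) (b * ((2) - (6)*t + (8)*t*t*t))); [eqt|eqt|eqt| unfold Rgt; pos 8%nat ].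
Qed.

Lemma g37 : good 37.
Proof. prep 37. extra. finish'. Qed.

Lemma g38 : good 38.
Proof. prep 38. extra. finish'. Qed.

Lemma g39 : good 39.
Proof. prep 39. extra. finish'. Qed.

Lemma g40 : good 40.
Proof. prep 40. extra. finish'. Qed.

Lemma g41 : good 41.
Proof. prep 41. extra. finish'. Qed.

Lemma g42 : good 42.
Proof. prep 42. extra. finish'. Qed.

Lemma g43 : good 43.
Proof. prep 43. extra. apply inside_sym; [ring|ring| |].
- apply (neq_eq _ (1 * ((1)))); [eqt | neq0'].
- apply (main_ineq _ _ _ (1 * ((1))) (b*b*b * ((1))) (b*b*b * ((2) - (2)*t + (8)*t*t))); [eqt|eqt|eqt| unfold Rgt; pos 8%nat ].
Qed.

Lemma g44 : good 44.
Proof. prep 44. extra. apply inside_sym; [ring|ring| |].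
- apply (neq_eq _ (1 * ((1)))); [eqt | neq0'].
- apply (main_ineq _ _ _ (1 * ((1))) (b*b * (- (1) + (2)*t)) (b*b * (- (2) + (8)*t - (8)*t*t))); [eqt|eqt|eqt| unfold Rgt; pos 8%nat ].
Qed.

Lemma g45 : good 45.
Proof. prep 45. extra. finish'. Qed.

Lemma g46 : good 46.
Proof. prep 46. extra. apply inside_sym; [ring|ring| |].
- apply (neq_eq _ (1 * ((1)))); [eqt | neq0'].
- apply (main_ineq _ _ _ (1 * ((1))) (b * ((1) - (2)*t*t)) (b * ((2) - (2)*t + (4)*t*t*t))); [eqt|eqt|eqt| unfold Rgt; pos 8%nat ].
Qed.

Lemma g47 : good 47.
Proof. prep 47. extra. leaves. apply inside_sym; [ring|ring| |].
- apply (neq_eq _ 1); [eqt | neq0'].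
- apply (main_ineq _ _ _ 1 (b*(-(1-2*t*t))) (b*(-(2*((1-2*t)*(1+t)) + 12*(t*t*t) + 16*(t*t*t)*((1/2-t)*(1/2+t)))))); [eqt|eqt|eqt| unfold Rgt; pos 12%nat ].
Qed.

Lemma g48 : good 48.
Proof. prep 48. extra. finish'. Qed.

Lemma g49 : good 49.
Proof. prep 49. extra. leaves. apply inside_sym; [ring|ring| |].
- apply (neq_eq _ 1); [eqt | neq0'].
- apply (main_ineq _ _ _ 1 (b*(-(t*(3-4*t*t)))) (b*(-(4*t*(1 + t*t + 6*(t*t)*((1-2*t)*(1+2*t)) + 16*(t*t*t*t*t*t)))))); [eqt|eqt|eqt| unfold Rgt; pos 12%nat ].
Qed.

Lemma g50 : good 50.
Proof. prep 50. extra. leaves. apply inside_sym; [ring|ring| |].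
- apply (neq_eq _ 1); [apply (eq_cof s t r3 _ _ 0 0); [assumption|assumption|field] | neq0'].
- apply (main_ineq _ _ _ 1 (b*(-(s*((1-2*t)*(1+2*t))))) (b*(-(2*s*(((1-2*t)*(1+2*t))*((1-2*t)*(1+2*t)))*(1-2*t*t))))); [apply (eq_cof s t r3 _ _ 0 0); [assumption|assumption|field]|apply (eq_cof s t r3 _ _ (- (4)*b*s) 0); [assumption|assumption|field]|apply (eq_cof s t r3 _ _ (- (8)*b*s - (64)*b*t*t*t*t*s) 0); [assumption|assumption|field]| unfold Rgt; pos 12%nat ].
Qed.

Lemma g51 : good 51.
Proof. prep 51. extra. finish'. Qed.

Lemma g52 : good 52.
Proof. prep 52. extra. leaves. apply inside_sym; [ring|ring| |].
- apply (neq_eq _ 1); [eqt | neq0'].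
- apply (main_ineq _ _ _ 1 (b*(-(t*((1-2*t*t)*(3-4*t*t))))) (b*(-(4*t*(1-t*t))))); [eqt|eqt|eqt| unfold Rgt; pos 12%nat ].
Qed.

Lemma g53 : good 53.
Proof. prep 53. extra. finish'. Qed.

Lemma g54 : good 54.
Proof. prep 54. extra. finish'. Qed.

Lemma g55 : good 55.
Proof. prep 55. extra. finish'. Qed.

Lemma g56 : good 56.
Proof. prep 56. extra. finish'. Qed.

Lemma g57 : good 57.
Proof. prep 57. extra. finish'. Qed.

Lemma g58 : good 58.
Proof. prep 58. extra. finish'. Qed.

Lemma g60 : good 60.
Proof. prep 60. extra. finish'. Qed.

Lemma g61 : good 61.
Proof. prep 61. extra. finish'. Qed.

Lemma g62 : good 62.
Proof. prep 62. extra. leaves. apply inside_sym; [ring|ring| |].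
- apply (neq_eq _ 1); [eqt | neq0'].
- apply (main_ineq _ _ _ 1 (b*(-((1/2)*(s*r3 - t)))) (b*(-(s*r3*(1+2*t*t) - 2*t*(1-t*t))))); [eqt|eqt|eqt| unfold Rgt; pos 12%nat ].
Qed.

Lemma g63 : good 63.
Proof. prep 63. extra. finish'. Qed.

Lemma g64 : good 64.
Proof. prep 64. extra. apply inside_sym; [ring|ring| |].
- apply (neq_eq _ (1 * ((2)*t*t*t))); [eqt | neq0'].
- apply (main_ineq _ _ _ (1 * ((1) - (3)*t*t)) (b * ((1))) (b * ((2) - (6)*t*t + (4)*t*t*t*t))); [eqt|eqt|eqt| unfold Rgt; pos 8%nat ].
Qed.

Lemma g65 : good 65.
Proof. prep 65. extra. finish'. Qed.

Lemma g66 : good 66.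
Proof. prep 66. extra. leaves. apply inside_sym; [ring|ring| |].
- apply (neq_eq _ (b*b*b*b*b*(16*t*t*t*t))); [eqt | neq0'].
- apply (main_ineq _ _ _ (b*b*b*b*b*(4*t*(1/2 + (1/2)*((1-2*t)*(1+2*t)*(1+4*t*t))))) (b*1) (b*b*b*b*b*b*(8*t*(3/4 + (1/4)*((1-2*t)*(1+2*t)*(1+4*t*t)))))); [eqt|eqt|eqt| unfold Rgt; pos 12%nat ].
Qed.

Lemma g67 : good 67.
Proof. prep 67. extra. leaves. apply inside_sym; [ring|ring| |].
- apply (neq_eq _ (b*b*b*b*b*(-(4*t*t*((1-2*t)*(1+2*t)))))); [eqt | neq0'].
- apply (main_ineq _ _ _ (b*b*b*b*b*(2*t*((1-2*t)*(1+2*t)*(1+4*t*t)))) (b*1) (b*b*b*b*b*b*(4*t*((1-2*t)*(1+2*t)*(1+2*t*t))))); [eqt|eqt|eqt| unfold Rgt; pos 12%nat ].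
Qed.

Lemma g69 : good 69.
Proof. prep 69. extra. apply inside_sym; [ring|ring| |].
- apply (neq_eq _ (1 * ((1)))); [eqt | neq0'].
- apply (main_ineq _ _ _ (1 * ((1))) (b*b * ((4)*t*t)) (b*b * ((2) + (4)*t*t))); [eqt|eqt|eqt| unfold Rgt; pos 8%nat ].
Qed.

Lemma g71 : good 71.
Proof. prep 71. extra. finish'. Qed.

Lemma g72 : good 72.
Proof. prep 72. extra. finish'. Qed.

Lemma g73 : good 73.
Proof. prep 73. extra. finish'. Qed.

Lemma g74 : good 74.
Proof. prep 74. extra. apply inside_sym; [ring|ring| |].
- apply (neq_eq _ (1 * (- t + (4)*t*t*t))); [eqt | neq0'].
- apply (main_ineq _ _ _ (1 * ((1) - (4)*t*t)) (b * ((1))) (b * ((2) - (10)*t*t + (8)*t*t*t*t))); [eqt|eqt|eqt| unfold Rgt; pos 8%nat ].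
Qed.

Lemma g75 : good 75.
Proof. prep 75. extra. finish'. Qed.

Lemma g76 : good 76.
Proof. prep 76. extra. finish'. Qed.

Lemma g77 : good 77.
Proof. prep 77. extra. finish'. Qed.

Lemma g78 : good 78.
Proof. prep 78. extra. finish'. Qed.

Lemma g79 : good 79.
Proof. prep 79. extra. finish'. Qed.

Lemma g80 : good 80.
Proof. prep 80. extra. apply inside_sym; [ring|ring| |].
- apply (neq_eq _ (1 * ((1) - (2)*t))); [eqt | neq0'].
- apply (main_ineq _ _ _ (1 * (- (1) + (4)*t*t)) (b * ((1))) (b * (- (2) + (2)*t + (4)*t*t))); [eqt|eqt|eqt| unfold Rgt; pos 8%nat ].
Qed.

Lemma g81 : good 81.
Proof. prep 81. extra. finish'. Qed.

Lemma g82 : good 82.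
Proof. prep 82. extra. finish'. Qed.

Lemma g83 : good 83.
Proof. prep 83. extra. finish'. Qed.

Lemma g84 : good 84.
Proof. prep 84. extra. finish'. Qed.

Lemma g85 : good 85.
Proof. prep 85. extra. finish'. Qed.

Lemma g86 : good 86.
Proof. prep 86. extra. finish'. Qed.

Lemma g88 : good 88.
Proof. prep 88. extra. apply inside_sym; [ring|ring| |].
- apply (neq_eq _ (b * (- (1) + (2)*t))); [eqt | neq0'].
- apply (main_ineq _ _ _ (b * ((2) - (4)*t)) (b * ((1))) (b*b * ((4) - (10)*t + (4)*t*t))); [eqt|eqt|eqt| unfold Rgt; pos 8%nat ].
Qed.

Lemma g89 : good 89.
Proof. prep 89. extra. finish'. Qed.

Lemma g92 : good 92.
Proof. prep 92. extra. finish'. Qed.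

Lemma g94 : good 94.
Proof. prep 94. extra. leaves. apply inside_sym; [ring|ring| |].
- apply (neq_eq _ (-(s*((1-2*t)*(1+2*t))))); [apply (eq_cof s t r3 _ _ (- (4)*s) 0); [assumption|assumption|field] | neq0'].
- apply (main_ineq _ _ _ (2*t*s*((1-2*t)*(1+2*t)*(3-4*t*t))) b (b*(2*t*s*((1-2*t)*(1+2*t)*(5-8*t*t))))); [apply (eq_cof s t r3 _ _ (- (32)*t*t*t*s) 0); [assumption|assumption|field]|apply (eq_cof s t r3 _ _ 0 0); [assumption|assumption|field]|apply (eq_cof s t r3 _ _ (- (8)*b*t*s - (64)*b*t*t*t*s) 0); [assumption|assumption|field]| unfold Rgt; pos 12%nat ].
Qed.

Lemma g95 : good 95.
Proof. prep 95. extra. leaves. apply inside_sym; [ring|ring| |].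
- apply (neq_eq _ (b*b*b*b*(4*t*t*(3-4*t*t)))); [eqt | neq0'].
- apply (main_ineq _ _ _ (b*b*b*b*(8*t*t)) 1 (b*b*b*b*(4*t*t*(7-4*t*t)))); [eqt|eqt|eqt| unfold Rgt; pos 12%nat ].
Qed.

Lemma g97 : good 97.
Proof. prep 97. extra. finish'. Qed.

Lemma g98 : good 98.
Proof. prep 98. extra. leaves. apply inside_sym; [ring|ring| |].
- apply (neq_eq _ (b*b*b*b*(-(4*t*t*((1-2*t)*(1+2*t)))))); [eqt | neq0'].
- apply (main_ineq _ _ _ (b*b*b*b*(2*((1-2*t)*(1+2*t)))) (b*b*b*(2*t)) (b*b*b*b*b*b*b*(8*t*((1-t*t)*((1-2*t)*(1+2*t)))))); [eqt|eqt|eqt| unfold Rgt; pos 12%nat ].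
Qed.

Lemma b100 : bad 100 (1/4).
Proof. unfold bad. prep 100. intros [Eb Et]. apply not_inside0. ring. Qed.
Lemma b99 : bad 99 (1/4).
Proof. unfold bad. prep 99. intros [Eb Et]. apply not_inside0. ring. Qed.
Lemma b59 : bad 59 (1/4).
Proof. unfold bad. prep 59. intros [Eb Et]. apply not_inside0. ring. Qed.
Lemma b30 : bad 30 (1/4).
Proof. unfold bad. prep 30. intros [Eb Et]. apply not_inside; [ring|ring|right]. subst. nra. Qed.
Lemma b26 : bad 26 (1/4).
Proof. unfold bad. prep 26. intros [Eb Et]. apply not_inside; [ring|ring|right]. subst. nra. Qed.
Lemma b68 : bad 68 (1/4).
Proof. unfold bad. prep 68. intros [Eb Et]. apply not_inside; [ring|ring|right]. subst. nra. Qed.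
Lemma b87 : bad 87 (9/41).
Proof. unfold bad. prep 87. intros [Eb Et]. apply not_inside; [ring|ring|right]. subst. nra. Qed.
Lemma b90 : bad 90 (12/37).
Proof. unfold bad. prep 90. intros [Eb Et]. apply not_inside; [ring|ring|right]. subst. nra. Qed.
Lemma b91 : bad 91 (7/20).
Proof. unfold bad. prep 91. intros [Eb Et]. apply not_inside; [ring|ring|right]. subst. nra. Qed.
Lemma b93 : bad 93 (1/4).
Proof. unfold bad. prep 93. intros [Eb Et]. apply not_inside; [ring|ring|right]. subst. nra. Qed.
Lemma b96 : bad 96 (7/20).
Proof. unfold bad. prep 96. intros [Eb Et]. apply not_inside; [ring|ring|right]. subst. nra. Qed.
Lemma b18 : bad 18 (9/41).
Proof. unfold bad. prep 18. intros [Eb Et]. apply not_inside; [ring|ring|right]. subst b.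
  assert (Es : s = 40/41). { rewrite Et in H0. nra. }
  rewrite Es, Et. nra. Qed.

Lemma r2facts : 0 < sqrt 2 /\ sqrt 2 * sqrt 2 = 2.
Proof. split. apply sqrt_lt_R0; lra. apply sqrt_sqrt; lra. Qed.
Definition t70 := sqrt (2 - sqrt 2) / 2.
Lemma t70_facts : 0 < t70 /\ t70 < 1/2 /\ t70 * t70 = (2 - sqrt 2)/4.
Proof. destruct r2facts as [H1 H2]. assert (1 < sqrt 2) by nra.
  assert (Hp : 0 < 2 - sqrt 2) by nra.
  pose proof (sqrt_lt_R0 _ Hp) as H3. pose proof (sqrt_sqrt _ (Rlt_le _ _ Hp)) as H4.
  unfold t70. split; [lra|split; [|replace (sqrt (2 - sqrt 2) / 2 * (sqrt (2 - sqrt 2) / 2)) with (sqrt (2 - sqrt 2) * sqrt (2 - sqrt 2) / 4) by field; rewrite H4; reflexivity]].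
  assert (sqrt (2 - sqrt 2) < 1) by nra. lra. Qed.
Lemma b70 : bad 70 t70.
Proof. unfold bad. prep 70. intros [Eb Et]. apply not_inside; [ring|ring|left]. subst b.
  destruct t70_facts as [_ [_ Ht]]. rewrite <- Et in Ht. destruct r2facts as [Hr1 Hr2].
  match goal with |- ?e = 0 => replace e with (4*(t*t)*(8*(t*t)*(t*t) - 8*(t*t) + 1)) by ring end.
  rewrite Ht. nra. Qed.


Lemma good_to n : good n -> inside_all_isosceles n.
Proof.
  intros G a b Ha Hab.
  assert (Hb : 0 < b) by lra.
  assert (Hi : 0 < / (2*b)) by (apply Rinv_0_lt_compat; lra).
  assert (Hbi : b * / (2*b) = 1/2) by (field; lra).
  replace a with (2*b*(a/(2*b))) by (field; lra).
  apply G; unfold Rdiv; nra.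
Qed.
Lemma bad_to n t0 : 0 < t0 -> t0 < 1/2 -> bad n t0 -> ~ inside_all_isosceles n.
Proof. intros H0 H1 B G. apply (B 1 t0); try lra; auto. apply (G (2*1*t0) 1); lra. Qed.

Lemma all_good n : (1 <= n <= 100)%nat -> ~ In n S_exc -> good n.
Proof.
  intros Hn HS.
  destruct n as [|n]; [lia|].
  destruct n as [|n]; [exact g1|].
  destruct n as [|n]; [exact g2|].
  destruct n as [|n]; [exact g3|].
  destruct n as [|n]; [exact g4|].
  destruct n as [|n]; [exact g5|].
  destruct n as [|n]; [exact g6|].
  destruct n as [|n]; [exact g7|].
  destruct n as [|n]; [exact g8|].
  destruct n as [|n]; [exact g9|].
  destruct n as [|n]; [exact g10|].
  destruct n as [|n]; [exact g11|].
  destruct n as [|n]; [exact g12|].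
  destruct n as [|n]; [exact g13|].
  destruct n as [|n]; [exact g14|].
  destruct n as [|n]; [exact g15|].
  destruct n as [|n]; [exact g16|].
  destruct n as [|n]; [exact g17|].
  destruct n as [|n]; [exfalso; apply HS; simpl; tauto|].
  destruct n as [|n]; [exact g19|].
  destruct n as [|n]; [exact g20|].
  destruct n as [|n]; [exact g21|].
  destruct n as [|n]; [exact g22|].
  destruct n as [|n]; [exact g23|].
  destruct n as [|n]; [exact g24|].
  destruct n as [|n]; [exact g25|].
  destruct n as [|n]; [exfalso; apply HS; simpl; tauto|].
  destruct n as [|n]; [exact g27|].
  destruct n as [|n]; [exact g28|].
  destruct n as [|n]; [exact g29|].
  destruct n as [|n]; [exfalso; apply HS; simpl; tauto|].
  destruct n as [|n]; [exact g31|].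
  destruct n as [|n]; [exact g32|].
  destruct n as [|n]; [exact g33|].
  destruct n as [|n]; [exact g34|].
  destruct n as [|n]; [exact g35|].
  destruct n as [|n]; [exact g36|].
  destruct n as [|n]; [exact g37|].
  destruct n as [|n]; [exact g38|].
  destruct n as [|n]; [exact g39|].
  destruct n as [|n]; [exact g40|].
  destruct n as [|n]; [exact g41|].
  destruct n as [|n]; [exact g42|].
  destruct n as [|n]; [exact g43|].
  destruct n as [|n]; [exact g44|].
  destruct n as [|n]; [exact g45|].
  destruct n as [|n]; [exact g46|].
  destruct n as [|n]; [exact g47|].
  destruct n as [|n]; [exact g48|].
  destruct n as [|n]; [exact g49|].
  destruct n as [|n]; [exact g50|].
  destruct n as [|n]; [exact g51|].
  destruct n as [|n]; [exact g52|].
  destruct n as [|n]; [exact g53|].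
  destruct n as [|n]; [exact g54|].
  destruct n as [|n]; [exact g55|].
  destruct n as [|n]; [exact g56|].
  destruct n as [|n]; [exact g57|].
  destruct n as [|n]; [exact g58|].
  destruct n as [|n]; [exfalso; apply HS; simpl; tauto|].
  destruct n as [|n]; [exact g60|].
  destruct n as [|n]; [exact g61|].
  destruct n as [|n]; [exact g62|].
  destruct n as [|n]; [exact g63|].
  destruct n as [|n]; [exact g64|].
  destruct n as [|n]; [exact g65|].
  destruct n as [|n]; [exact g66|].
  destruct n as [|n]; [exact g67|].
  destruct n as [|n]; [exfalso; apply HS; simpl; tauto|].
  destruct n as [|n]; [exact g69|].
  destruct n as [|n]; [exfalso; apply HS; simpl; tauto|].
  destruct n as [|n]; [exact g71|].
  destruct n as [|n]; [exact g72|].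
  destruct n as [|n]; [exact g73|].
  destruct n as [|n]; [exact g74|].
  destruct n as [|n]; [exact g75|].
  destruct n as [|n]; [exact g76|].
  destruct n as [|n]; [exact g77|].
  destruct n as [|n]; [exact g78|].
  destruct n as [|n]; [exact g79|].
  destruct n as [|n]; [exact g80|].
  destruct n as [|n]; [exact g81|].
  destruct n as [|n]; [exact g82|].
  destruct n as [|n]; [exact g83|].
  destruct n as [|n]; [exact g84|].
  destruct n as [|n]; [exact g85|].
  destruct n as [|n]; [exact g86|].
  destruct n as [|n]; [exfalso; apply HS; simpl; tauto|].
  destruct n as [|n]; [exact g88|].
  destruct n as [|n]; [exact g89|].
  destruct n as [|n]; [exfalso; apply HS; simpl; tauto|].
  destruct n as [|n]; [exfalso; apply HS; simpl; tauto|].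
  destruct n as [|n]; [exact g92|].
  destruct n as [|n]; [exfalso; apply HS; simpl; tauto|].
  destruct n as [|n]; [exact g94|].
  destruct n as [|n]; [exact g95|].
  destruct n as [|n]; [exfalso; apply HS; simpl; tauto|].
  destruct n as [|n]; [exact g97|].
  destruct n as [|n]; [exact g98|].
  destruct n as [|n]; [exfalso; apply HS; simpl; tauto|].
  destruct n as [|n]; [exfalso; apply HS; simpl; tauto|].
  lia.
Qed.

Theorem theorem2p4 :
  (forall n : nat, (1 <= n <= 100)%nat -> ~ In n S_exc -> inside_all_isosceles n) /\
  (forall n : nat, In n S_exc -> ~ inside_all_isosceles n).
Proof.
  split.
  - intros n Hn HS. apply good_to. apply all_good; assumption.
  - intros n HS. simpl in HS.
    destruct HS as [<-|HS]; [exact (bad_to 18 (9/41) ltac:(lra) ltac:(lra) b18)|].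
    destruct HS as [<-|HS]; [exact (bad_to 26 (1/4) ltac:(lra) ltac:(lra) b26)|].
    destruct HS as [<-|HS]; [exact (bad_to 30 (1/4) ltac:(lra) ltac:(lra) b30)|].
    destruct HS as [<-|HS]; [exact (bad_to 59 (1/4) ltac:(lra) ltac:(lra) b59)|].
    destruct HS as [<-|HS]; [exact (bad_to 68 (1/4) ltac:(lra) ltac:(lra) b68)|].
    destruct HS as [<-|HS]; [destruct t70_facts as [Ha [Hb _]]; exact (bad_to 70 t70 Ha Hb b70)|].
    destruct HS as [<-|HS]; [exact (bad_to 87 (9/41) ltac:(lra) ltac:(lra) b87)|].
    destruct HS as [<-|HS]; [exact (bad_to 90 (12/37) ltac:(lra) ltac:(lra) b90)|].
    destruct HS as [<-|HS]; [exact (bad_to 91 (7/20) ltac:(lra) ltac:(lra) b91)|].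
    destruct HS as [<-|HS]; [exact (bad_to 93 (1/4) ltac:(lra) ltac:(lra) b93)|].
    destruct HS as [<-|HS]; [exact (bad_to 96 (7/20) ltac:(lra) ltac:(lra) b96)|].
    destruct HS as [<-|HS]; [exact (bad_to 99 (1/4) ltac:(lra) ltac:(lra) b99)|].
    destruct HS as [<-|HS]; [exact (bad_to 100 (1/4) ltac:(lra) ltac:(lra) b100)|].
    destruct HS.
Qed.
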